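(* Let $M$ be a $\mathfrak p(n)$-supermodule and $a\ge1$. Label the tensor factors of $M\otimes V^{\otimes a}$ by $0,1,\dots,a$ and for $1\le j\le a$ set $Y_j=\sum_{i=0}^{j-1}\Omega_{ij}\in\mathrm{End}_{\mathfrak p(n)}(M\otimes V^{\otimes a})$. Then the operators $Y_1,\dots,Y_a$ pairwise commute.
   Context: Work over $\mathbb C$, $n\ge1$. Let $V=\mathbb C^{n|n}$ with even basis $v_1,\dots,v_n$ and odd basis $v_{1'},\dots,v_{n'}$; $\mathfrak{gl}(n|n)=\mathrm{End}(V)$ with matrix units $E_{rs}$. Let $\beta$ be the odd symmetric form on $V$ with $\beta(v_i,v_{j'})=\beta(v_{j'},v_i)=\delta_{ij}$ and zero on $V_{\bar0}\otimes V_{\bar0}$, $V_{\bar1}\otimes V_{\bar1}$; $\mathfrak p(n)\subset\mathfrak{gl}(n|n)$ is the subalgebra spanned by homogeneous $x$ with $\beta(xu,v)+(-1)^{\bar x\bar u}\beta(u,xv)=0$. Put $A^\pm_{ij}=E_{ij}\pm E_{j'i'}$, $B^\pm_{ij}=E_{ij'}\pm E_{ji'}$, $C^\pm_{ij}=E_{i'j}\pm E_{j'i}$, and $\Omega=\sum_{i,j}A^-_{ij}\otimes A^+_{ji}-\tfrac12\sum_iB^+_{ii}\otimes C^+_{ii}-\sum_{i<j}B^+_{ij}\otimes C^+_{ji}+\sum_{i<j}C^-_{ij}\otimes B^-_{ji}\in\mathfrak p(n)\otimes\mathfrak{gl}(n|n)$. $\Omega_{ij}$ ($i<j$) denotes the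 operator acting by the first tensor leg of $\Omega$ on factor $i$ (a $\mathfrak p(n)$-module) and the second leg on factor $j$ (a copy of $V$), identity elsewhere, with the Koszul sign rule $(x\otimes y)(m\otimes v)=(-1)^{\bar y\bar m}xm\otimes yv$. *)

(* Defs.v *)
From HB Require Import structures.
From mathcomp Require Import all_boot all_order all_algebra.

Set Implicit Arguments.
Unset Strict Implicit.
Unset Printing Implicit Defensive.

Import GRing.Theory Num.Theory.
Local Open Scope ring_scope.

Section PnDefs.

Variable F : fieldType.
Variable n : nat.

(* Basis of V = F^{n|n}: indices 'I_(n+n); v_i = lshift, v_{i'} = rshift. *)
Definition ipar (k : 'I_(n + n)) : bool := (n <= k)%N.
Definition ev (i : 'I_n) : 'I_(n + n) := lshift n i.
Definition od (i : 'I_n) : 'I_(n + n) := rshift n i.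

Definition homog (p : bool) (x : 'M[F]_(n + n)) : Prop :=
  forall r s, (ipar r (+) ipar s) != p -> x r s = 0.

Definition homog_vec (q : bool) (u : 'cV[F]_(n + n)) : Prop :=
  forall r, ipar r != q -> u r 0 = 0.

Definition beta (u v : 'cV[F]_(n + n)) : F :=
  \sum_(i < n) (u (ev i) 0 * v (od i) 0 + u (od i) 0 * v (ev i) 0).

Definition preserves_beta (p : bool) (x : 'M[F]_(n + n)) : Prop :=
  forall (q : bool) (u v : 'cV[F]_(n + n)), homog_vec q u ->
    beta (x *m u) v + (-1) ^+ (p && q) * beta u (x *m v) = 0.

Definition in_pn (x : 'M[F]_(n + n)) : Prop :=
  exists x0 x1, [/\ x = x0 + x1, homog false x0, homog true x1,
                    preserves_beta false x0 & preserves_beta true x1].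

Definition Emu (r s : 'I_(n + n)) : 'M[F]_(n + n) := delta_mx r s.

Definition Ap (i j : 'I_n) := Emu (ev i) (ev j) + Emu (od j) (od i).
Definition Am (i j : 'I_n) := Emu (ev i) (ev j) - Emu (od j) (od i).
Definition Bp (i j : 'I_n) := Emu (ev i) (od j) + Emu (ev j) (od i).
Definition Bm (i j : 'I_n) := Emu (ev i) (od j) - Emu (ev j) (od i).
Definition Cp (i j : 'I_n) := Emu (od i) (ev j) + Emu (od j) (ev i).
Definition Cm (i j : 'I_n) := Emu (od i) (ev j) - Emu (od j) (ev i).

(* Given the action act1 of the first tensor leg and act2 of the second
   tensor leg (as operators on a space W), the operator of Omega, where
   x (x) y acts as act1 x \o act2 y (Koszul signs are built into act1/act2). *)
Definition Omega_op (W : lmodType F)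
    (act1 act2 : 'M[F]_(n + n) -> W -> W) (f : W) : W :=
    \sum_(i < n) \sum_(j < n) act1 (Am i j) (act2 (Ap j i) f)
  - 2%:R^-1 *: \sum_(i < n) act1 (Bp i i) (act2 (Cp i i) f)
  - \sum_(i < n) \sum_(j < n | (i < j)%N) act1 (Bp i j) (act2 (Cp j i) f)
  + \sum_(i < n) \sum_(j < n | (i < j)%N) act1 (Cm i j) (act2 (Bm j i) f).

Definition evpart (y : 'M[F]_(n + n)) : 'M[F]_(n + n) :=
  \matrix_(r, s) (if ipar r == ipar s then y r s else 0).
Definition oddpart (y : 'M[F]_(n + n)) : 'M[F]_(n + n) := y - evpart y.

Section Module.

Variables M0 M1 : lmodType F.
Local Notation SM := (M0 * M1)%type.

Definition sigmaM (m : SM) : SM := (m.1, - m.2).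

(* p(n)-supermodule structure given by rho : gl(n|n) -> End(M),
   only its values on p(n) matter. *)
Definition is_pn_supermodule (rho : 'M[F]_(n + n) -> SM -> SM) : Prop :=
  [/\
      forall x (c : F) (m m' : SM), rho x (c *: m + m') = c *: rho x m + rho x m',
      forall (c : F) x y (m : SM), in_pn x -> in_pn y ->
        rho (c *: x + y) m = c *: rho x m + rho y m,
      forall x, in_pn x -> homog false x ->
        (forall m0 : M0, (rho x (m0, 0)).2 = 0) /\
        (forall m1 : M1, (rho x (0, m1)).1 = 0),
      forall x, in_pn x -> homog true x ->
        (forall m0 : M0, (rho x (m0, 0)).1 = 0) /\
        (forall m1 : M1, (rho x (0, m1)).2 = 0)
    &
      forall (p q : bool) x y (m : SM), in_pn x -> in_pn y -> homog p x -> homog q y ->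
        rho (x *m y - (-1) ^+ (p && q) *: (y *m x)) m
        = rho x (rho y m) - (-1) ^+ (p && q) *: rho y (rho x m)].

Variable a : nat.

(* Model of M (x) V^{(x) a}: f represents sum_w f(w) (x) v_{w 0} (x) ... (x) v_{w (a-1)};
   tuple position t : 'I_a is tensor factor t+1. *)
Local Notation idx := {ffun 'I_a -> 'I_(n + n)}.
Definition TS := {ffun idx -> SM}.

Definition upd (w : idx) (t : 'I_a) (k : 'I_(n + n)) : idx :=
  [ffun s => if s == t then k else w s].

Definition sgn_before (w : idx) (t : 'I_a) : F :=
  \prod_(s < a | (s < t)%N) (-1) ^+ ipar (w s).

Definition act_hom (y : 'M[F]_(n + n)) (odd : bool) (t : 'I_a) (f : TS) : TS :=
  [ffun w : idx => \sum_(k < n + n) y (w t) k *: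
      (if odd then sgn_before w t *: sigmaM (f (upd w t k)) else f (upd w t k))].

Definition actV (y : 'M[F]_(n + n)) (t : 'I_a) (f : TS) : TS :=
  act_hom (evpart y) false t f + act_hom (oddpart y) true t f.

Definition actM (rho : 'M[F]_(n + n) -> SM -> SM) (x : 'M[F]_(n + n)) (f : TS) : TS :=
  [ffun w : idx => rho x (f w)].

Definition Omega0 rho (t : 'I_a) : TS -> TS :=
  Omega_op (actM rho) (fun y => actV y t).

Definition OmegaVV (s t : 'I_a) : TS -> TS :=
  Omega_op (fun x => actV x s) (fun y => actV y t).

Definition Yop rho (t : 'I_a) (f : TS) : TS :=
  Omega0 rho t f + \sum_(s < a | (s < t)%N) OmegaVV s t f.

End Module.
End PnDefs.

(* Main.v *)
Require Import Defs.
From HB Require Import structures.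
From mathcomp Require Import all_boot all_order all_algebra.
From mathcomp Require Import ring.
Import GRing.Theory Num.Theory.
Local Open Scope ring_scope.

Set Implicit Arguments.
Unset Strict Implicit.
Unset Printing Implicit Defensive.

Section Mat.
Variable F : fieldType.
Variable n : nat.
Local Notation I := 'I_(n + n).
Local Notation M := 'M[F]_(n + n).

Definition cj (k : I) : I := match split k with inl i => od i | inr i => ev i end.

Lemma ipar_ev (i : 'I_n) : ipar (ev i) = false.
Proof. by rewrite /ipar /ev /= leqNgt ltn_ord. Qed.
Lemma ipar_od (i : 'I_n) : ipar (od i) = true.
Proof. by rewrite /ipar /od /= leq_addr. Qed.

Lemma cj_ev (i : 'I_n) : cj (ev i) = od i.
Proof. by rewrite /cj; have -> : split (ev i) = inl i := unsplitK (inl i). Qed.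
Lemma cj_od (i : 'I_n) : cj (od i) = ev i.
Proof. by rewrite /cj; have -> : split (od i) = inr i := unsplitK (inr i). Qed.

Lemma ev_odP (P : I -> Prop) : (forall i, P (ev i)) -> (forall i, P (od i)) -> forall k, P k.
Proof. move=> He Ho k; rewrite -(splitK k); case: (split k) => i /=. exact: He. exact: Ho. Qed.

Lemma cjK : involutive cj.
Proof. move=> k; move: k; apply: ev_odP => i; by rewrite ?cj_ev ?cj_od ?cj_ev. Qed.
Lemma cj_inj : injective cj. Proof. exact: inv_inj cjK. Qed.
Lemma ipar_cj k : ipar (cj k) = ~~ ipar k.
Proof. by move: k; apply: ev_odP => i; rewrite ?cj_ev ?cj_od ?ipar_ev ?ipar_od. Qed.
Lemma cj_eq u r : (cj u == r) = (u == cj r).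
Proof. by rewrite -(inj_eq cj_inj) cjK. Qed.

Definition sgb (R S : bool) : F := if ~~ R && S then 1 else -1.
Definition sgt (r s : I) : F := sgb (ipar r) (ipar s).

Definition tau (y : M) : M := \matrix_(r, s) (sgt r s * y (cj s) (cj r)).
Definition Ptau (y : M) : M := y + tau y.

Lemma tauE y r s : tau y r s = sgt r s * y (cj s) (cj r).
Proof. by rewrite mxE. Qed.

Lemma tau_lin c y z : tau (c *: y + z) = c *: tau y + tau z.
Proof. apply/matrixP => r s; rewrite !mxE; ring. Qed.
Lemma tauD y z : tau (y + z) = tau y + tau z.
Proof. by apply/matrixP => r s; rewrite !mxE; ring. Qed.
Lemma tauZ c y : tau (c *: y) = c *: tau y.
Proof. by apply/matrixP => r s; rewrite !mxE; ring. Qed.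
Lemma tauB y z : tau (y - z) = tau y - tau z.
Proof. by apply/matrixP => r s; rewrite !mxE; ring. Qed.

Lemma tauK y : tau (tau y) = y.
Proof.
apply/matrixP => r s; rewrite !mxE !cjK /sgt !ipar_cj.
by case: (ipar r); case: (ipar s); rewrite /sgb /=; ring.
Qed.

Lemma Ptau_lin c y z : Ptau (c *: y + z) = c *: Ptau y + Ptau z.
Proof. rewrite /Ptau tau_lin scalerDr. by rewrite addrACA. Qed.
Lemma PtauD y z : Ptau (y + z) = Ptau y + Ptau z.
Proof. by rewrite /Ptau tauD addrACA. Qed.
Lemma tau_Ptau y : tau (Ptau y) = Ptau y.
Proof. by rewrite /Ptau tauD tauK addrC. Qed.

Lemma homog_delta r s : homog (ipar r (+) ipar s) (delta_mx r s : M).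
Proof.
move=> u v H; rewrite mxE.
have [eu|nu] := eqVneq u r; have [ev'|nv] := eqVneq v s => //=.
by subst; rewrite eqxx in H.
Qed.

Lemma homogD p (x y : M) : homog p x -> homog p y -> homog p (x + y).
Proof. by move=> hx hy r s H; rewrite mxE hx // hy // addr0. Qed.
Lemma homogZ p c (x : M) : homog p x -> homog p (c *: x).
Proof. by move=> hx r s H; rewrite mxE hx // mulr0. Qed.
Lemma homogN p (x : M) : homog p x -> homog p (- x).
Proof. by move=> hx r s H; rewrite mxE hx // oppr0. Qed.
Lemma homogB p (x y : M) : homog p x -> homog p y -> homog p (x - y).
Proof. by move=> hx hy; apply: homogD => //; apply: homogN. Qed.

Lemma homogM p q (x y : M) : homog p x -> homog q y -> homog (p (+) q) (x *m y).
Proof.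
move=> hx hy r s H; rewrite !mxE big1 // => u _.
have [h|h] := boolP ((ipar r (+) ipar u) == p); last by rewrite hx ?mul0r.
rewrite hy ?mulr0 //; move: H h; clear hx hy.
by case: (ipar r); case: (ipar u); case: (ipar s); case: p; case: q.
Qed.

Lemma tau_homog q y : homog q y -> homog q (tau y).
Proof.
move=> hy r s H; rewrite tauE hy ?mulr0 // !ipar_cj; move: H; clear hy.
by case: (ipar r); case: (ipar s); case: q.
Qed.
Lemma Ptau_homog q y : homog q y -> homog q (Ptau y).
Proof. by move=> hy; apply: homogD => //; apply: tau_homog. Qed.

Lemma tau_delta r s :
  tau (delta_mx r s) = sgt (cj s) (cj r) *: (delta_mx (cj s) (cj r) : M).
Proof.
apply/matrixP=> u v; rewrite !mxE !cj_eq andbC.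
by have [->|] := eqVneq u (cj s); have [->|] := eqVneq v (cj r); rewrite ?mulr0.
Qed.

Lemma tau_mul a b (A B : M) : homog a A -> homog b B ->
  tau (A *m B) = - (-1) ^+ (a && b) *: (tau B *m tau A).
Proof.
move=> hA hB; apply/matrixP => r s; rewrite !mxE [in RHS](reindex_inj cj_inj) /=.
rewrite mulr_sumr mulr_sumr; apply: eq_bigr => u _; rewrite !tauE !cjK.
case: (eqVneq (ipar (cj s) (+) ipar u) a) => [ha | /hA ->]; last by ring.
case: (eqVneq (ipar u (+) ipar (cj r)) b) => [hb | /hB ->]; last by ring.
rewrite -ha -hb /sgt !ipar_cj.
by case: (ipar r); case: (ipar s); case: (ipar u); rewrite /sgb /=; ring.
Qed.

Definition br (p q : bool) (x y : M) : M := x *m y - (-1) ^+ (p && q) *: (y *m x).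

Lemma sign_sq (b : bool) : (-1) ^+ b * (-1) ^+ b = 1 :> F.
Proof. by case: b; rewrite /= ?expr1 ?expr0 ?mulr1 ?mulrNN ?mulr1. Qed.

Lemma tau_br p q x y : homog p x -> homog q y -> tau (br p q x y) = br p q (tau x) (tau y).
Proof.
move=> hx hy; rewrite /br tauB tauZ (tau_mul hx hy) (tau_mul hy hx) andbC.
rewrite !scaleNr scalerN scalerA sign_sq scale1r opprK addrC.
by [].
Qed.

Lemma br_addr p q x y z : br p q x (y + z) = br p q x y + br p q x z.
Proof. by rewrite /br mulmxDr mulmxDl scalerDr opprD addrACA. Qed.

Lemma Ptau_br p q x y : homog p x -> homog q y -> tau x = x ->
  Ptau (br p q x y) = br p q x (Ptau y).
Proof. by move=> hx hy tx; rewrite /Ptau tau_br // tx br_addr. Qed.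

Definition ER p (x : M) := forall r s, x r s = - (-1) ^+ (p && ipar s) * x (cj s) (cj r).

Lemma ER_Ptau q y : homog q y -> ER q (Ptau y).
Proof.
move=> hy r s; rewrite !mxE !cjK.
case: (eqVneq (ipar r (+) ipar s) q) => [hq|hq].
  by rewrite -hq /sgt !ipar_cj; case: (ipar r); case: (ipar s); rewrite /sgb /=; ring.
rewrite (hy r s hq) hy; first by ring.
by rewrite !ipar_cj; move: hq; case: (ipar r); case: (ipar s).
Qed.

Lemma beta_alt (u v : 'cV[F]_(n + n)) : beta u v = \sum_(k < n + n) u k 0 * v (cj k) 0.
Proof.
rewrite /beta big_split_ord big_split /=.
by congr (_ + _); apply: eq_bigr => i _; rewrite -/(ev i) -/(od i) ?cj_ev ?cj_od.
Qed.

Lemma ER_beta p x : ER p x -> preserves_beta p x.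
Proof.
move=> hER q u v hu; rewrite !beta_alt.
have -> : \sum_(k < n + n) (x *m u) k 0 * v (cj k) 0
        = \sum_(j < n + n) \sum_(k < n + n) x k j * u j 0 * v (cj k) 0.
  rewrite exchange_big; apply: eq_bigr => k _; rewrite mxE mulr_suml.
  by apply: eq_bigr.
have -> : \sum_(k < n + n) u k 0 * (x *m v) (cj k) 0
        = \sum_(j < n + n) \sum_(k < n + n) u j 0 * x (cj j) (cj k) * v (cj k) 0.
  apply: eq_bigr => j _; rewrite mxE mulr_sumr (reindex_inj cj_inj) /=.
  by apply: eq_bigr => k _; rewrite mulrA.
rewrite mulr_sumr -big_split /= big1 // => j _.
rewrite mulr_sumr -big_split /= big1 // => k _ /=.
case: (eqVneq (ipar j) q) => [hj | /hu ->]; last by rewrite !(mul0r, mulr0, addr0).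
by rewrite (hER k j) -hj; set sg := (-1) ^+ _; ring.
Qed.

Lemma evpart_homog (y : M) : homog false (evpart y).
Proof.
move=> r s; rewrite mxE; case: (ipar r); case: (ipar s) => //=.
Qed.

Lemma oddpart_homog (y : M) : homog true (oddpart y).
Proof.
move=> r s; rewrite /oddpart !mxE; case: (ipar r); case: (ipar s) => //= _; by rewrite subrr.
Qed.

Lemma in_pn_Ptau (y : M) : in_pn (Ptau y).
Proof.
exists (Ptau (evpart y)), (Ptau (oddpart y)); split.
- by rewrite -PtauD /oddpart addrC subrK.
- exact/Ptau_homog/evpart_homog.
- exact/Ptau_homog/oddpart_homog.
- exact/ER_beta/ER_Ptau/evpart_homog.
- exact/ER_beta/ER_Ptau/oddpart_homog.
Qed.

Lemma Ptau_ee (i j : 'I_n) : Ptau (delta_mx (ev i) (ev j)) = Am F i j.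
Proof.
rewrite /Ptau tau_delta !cj_ev /sgt !ipar_od /sgb /= scaleN1r.
by rewrite /Am /Emu.
Qed.
Lemma Ptau_eo (i j : 'I_n) : Ptau (delta_mx (ev i) (od j)) = Bp F i j.
Proof.
rewrite /Ptau tau_delta cj_ev cj_od /sgt ipar_od ipar_ev /sgb /= scale1r.
by rewrite /Bp /Emu.
Qed.
Lemma Ptau_oe (i j : 'I_n) : Ptau (delta_mx (od i) (ev j)) = Cm F i j.
Proof.
rewrite /Ptau tau_delta cj_ev cj_od /sgt ipar_od ipar_ev /sgb /= scaleN1r.
by rewrite /Cm /Emu.
Qed.
Lemma Ptau_oo (i j : 'I_n) : Ptau (delta_mx (od i) (od j)) = - Am F j i.
Proof.
rewrite /Ptau tau_delta !cj_od /sgt !ipar_ev /sgb /= scaleN1r.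
by rewrite /Am /Emu opprB.
Qed.

End Mat.

Section Casimir.
Variables (F : fieldType) (n : nat) (W : lmodType F).
Local Notation I := 'I_(n + n).
Local Notation M := 'M[F]_(n + n).
Local Notation E := (@delta_mx F (n + n) (n + n)).

Definition lin (U V : lmodType F) (T : U -> V) :=
  forall (c : F) f g, T (c *: f + g) = c *: T f + T g.

Section LinT.
Variables (U V : lmodType F) (T : U -> V).
Hypothesis hT : lin T.
Lemma lin0 : T 0 = 0.
Proof.
have h := hT 1 0 0; rewrite !scale1r !addr0 in h.
by apply: (addrI (T 0)); rewrite addr0 -h.
Qed.
Lemma linD f g : T (f + g) = T f + T g.
Proof. by have := hT 1 f g; rewrite !scale1r. Qed.
Lemma linZ c f : T (c *: f) = c *: T f.
Proof. by have := hT c f 0; rewrite !addr0 lin0 addr0. Qed.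
Lemma linN f : T (- f) = - T f.
Proof. by rewrite -scaleN1r linZ scaleN1r. Qed.
Lemma linB f g : T (f - g) = T f - T g.
Proof. by rewrite linD linN. Qed.
Lemma lin_sum (J : Type) (r : seq J) (P : pred J) (G : J -> U) :
  T (\sum_(j <- r | P j) G j) = \sum_(j <- r | P j) T (G j).
Proof. exact: (big_morph T linD lin0). Qed.
Lemma lin_sumZ (J : Type) (r : seq J) (P : pred J) (c : J -> F) (G : J -> U) :
  T (\sum_(j <- r | P j) c j *: G j) = \sum_(j <- r | P j) c j *: T (G j).
Proof. by rewrite lin_sum; apply: eq_bigr => j _; rewrite linZ. Qed.
End LinT.

Definition lmx (L : M -> W -> W) := forall g, lin (fun y : M => L y g).

Section LinL.
Variable L : M -> W -> W.
Hypothesis hL : lmx L.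
Lemma L_0 g : L 0 g = 0. Proof. exact: (lin0 (hL g)). Qed.
Lemma L_D y z g : L (y + z) g = L y g + L z g. Proof. exact: (linD (hL g)). Qed.
Lemma L_Z c y g : L (c *: y) g = c *: L y g. Proof. exact: (linZ (hL g)). Qed.
Lemma L_N y g : L (- y) g = - L y g. Proof. exact: (linN (hL g)). Qed.
Lemma L_B y z g : L (y - z) g = L y g - L z g. Proof. exact: (linB (hL g)). Qed.
Lemma L_sumZ (J : Type) (r : seq J) (P : pred J) (c : J -> F) (G : J -> M) g :
  L (\sum_(j <- r | P j) c j *: G j) g = \sum_(j <- r | P j) c j *: L (G j) g.
Proof. exact: (lin_sumZ (hL g)). Qed.
End LinL.

Definition Kop (Xp Z : M -> W -> W) (g : W) : W :=
  \sum_(r < n + n) \sum_(s < n + n) (-1) ^+ (ipar s) *: Xp (E r s) (Z (E s r) g).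

Lemma Kop_lin Xp Z : (forall y, lin (Xp y)) -> (forall y, lin (Z y)) -> lin (Kop Xp Z).
Proof.
move=> hX hZ c f g; rewrite /Kop scaler_sumr -big_split; apply: eq_bigr => r _ /=.
rewrite scaler_sumr -big_split; apply: eq_bigr => s _ /=.
by rewrite hZ hX scalerDr !scalerA mulrC.
Qed.

Lemma sum_eq_l (G : I -> F) r : \sum_(k < n + n) (k == r)%:R * G k = G r.
Proof.
rewrite (bigD1 r) //= eqxx mul1r big1 ?addr0 // => k /negbTE ->.
by rewrite mul0r.
Qed.

Lemma mulmx_dr (x : M) r s : x *m E r s = \sum_(u < n + n) x u r *: E u s.
Proof.
apply/matrixP => i j; rewrite mxE summxE.
case: (eqVneq j s) => [->|njs].
  rewrite (bigD1 r) //= big1 => [|k /negbTE nk]; last by rewrite mxE nk mulr0.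
  rewrite addr0 mxE !eqxx mulr1 (bigD1 i) //= big1 => [|k /negbTE nk].
    by rewrite !mxE !eqxx addr0 mulr1.
  by rewrite !mxE eq_sym nk mulr0.
rewrite big1 => [|k _]; last by rewrite mxE (negbTE njs) andbF mulr0.
by rewrite big1 // => k _; rewrite !mxE (negbTE njs) andbF mulr0.
Qed.

Lemma mulmx_dl (x : M) r s : E r s *m x = \sum_(v < n + n) x s v *: E r v.
Proof.
apply/matrixP => i j; rewrite mxE summxE.
case: (eqVneq i r) => [->|nir].
  rewrite (bigD1 s) //= big1 => [|k /negbTE nk]; last by rewrite mxE nk andbF mul0r.
  rewrite addr0 mxE !eqxx mul1r (bigD1 j) //= big1 => [|k /negbTE nk].
    by rewrite !mxE !eqxx addr0 mulr1.
  by rewrite !mxE eqxx (eq_sym j) nk mulr0.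
rewrite big1 => [|k _]; last by rewrite mxE (negbTE nir) mul0r.
by rewrite big1 // => k _; rewrite !mxE (negbTE nir) mulr0.
Qed.

Lemma sum3_perm (V : zmodType) (G : I -> I -> I -> V) :
  \sum_(a < n + n) \sum_(b < n + n) \sum_(c < n + n) G a b c
  = \sum_(c < n + n) \sum_(b < n + n) \sum_(a < n + n) G a b c.
Proof.
rewrite exchange_big /=; under eq_bigr do rewrite exchange_big /=.
by rewrite exchange_big.
Qed.

Lemma sum3_swap (V : zmodType) (G : I -> I -> I -> V) :
  \sum_(a < n + n) \sum_(b < n + n) \sum_(c < n + n) G a b c
  = \sum_(a < n + n) \sum_(c < n + n) \sum_(b < n + n) G a b c.
Proof. by apply: eq_bigr => a _; rewrite exchange_big. Qed.

Lemma sgn_pair (p : bool) (r s : I) :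
  (-1) ^+ (p && (ipar r (+) ipar s)) * (-1) ^+ (p && (ipar s (+) ipar r)) = 1 :> F.
Proof. by rewrite addbC sign_sq. Qed.

Section Main.
Variables (X Xp Z : M -> W -> W) (x : M) (p : bool).
Hypotheses (hXp : lmx Xp) (hZ : lmx Z).
Hypotheses (hXpf : forall y, lin (Xp y)) (hZf : forall y, lin (Z y)) (hXx : lin (X x)).
Hypothesis hx : homog p x.
Local Notation sg r s := ((-1) ^+ (p && (ipar r (+) ipar s)) : F).
Hypothesis Xbr : forall r s g, Xp (br p (ipar r (+) ipar s) x (E r s)) g
   = X x (Xp (E r s) g) - sg r s *: Xp (E r s) (X x g).
Hypothesis Zbr : forall r s g, Z (br p (ipar r (+) ipar s) x (E r s)) g
   = Z x (Z (E r s) g) - sg r s *: Z (E r s) (Z x g).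
Hypothesis XZ : forall r s g, X x (Z (E r s) g) = sg r s *: Z (E r s) (X x g).
Hypothesis ZX : forall r s g, Z x (Xp (E r s) g) = sg r s *: Xp (E r s) (Z x g).

Lemma Xbr' r s h : X x (Xp (E r s) h)
  = Xp (br p (ipar r (+) ipar s) x (E r s)) h + sg r s *: Xp (E r s) (X x h).
Proof. by rewrite Xbr subrK. Qed.
Lemma Zbr' r s h : Z x (Z (E r s) h)
  = Z (br p (ipar r (+) ipar s) x (E r s)) h + sg r s *: Z (E r s) (Z x h).
Proof. by rewrite Zbr subrK. Qed.

Lemma stepA g : X x (Kop Xp Z g) =
  \sum_(r < n + n) \sum_(s < n + n) (-1) ^+ (ipar s) *:
      Xp (br p (ipar r (+) ipar s) x (E r s)) (Z (E s r) g) + Kop Xp Z (X x g).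
Proof.
rewrite /Kop (lin_sum hXx) -big_split; apply: eq_bigr => r _ /=.
rewrite (lin_sum hXx) -big_split; apply: eq_bigr => s _ /=.
rewrite (linZ hXx) Xbr' XZ (linZ (hXpf _)) scalerA sgn_pair scale1r scalerDr.
by [].
Qed.

Lemma stepB g : Z x (Kop Xp Z g) =
  \sum_(r < n + n) \sum_(s < n + n) (-1) ^+ (ipar s) *:
      (sg r s *: Xp (E r s) (Z (br p (ipar s (+) ipar r) x (E s r)) g))
  + Kop Xp Z (Z x g).
Proof.
rewrite /Kop (lin_sum (hZf x)) -big_split; apply: eq_bigr => r _ /=.
rewrite (lin_sum (hZf x)) -big_split; apply: eq_bigr => s _ /=.
rewrite (linZ (hZf x)) ZX Zbr' (linD (hXpf _)) (linZ (hXpf _)) scalerDr scalerA.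
by rewrite sgn_pair scale1r scalerDr.
Qed.

Lemma stepD g :
  \sum_(r < n + n) \sum_(s < n + n) (-1) ^+ (ipar s) *:
      Xp (br p (ipar r (+) ipar s) x (E r s)) (Z (E s r) g)
  + \sum_(r < n + n) \sum_(s < n + n) (-1) ^+ (ipar s) *:
      (sg r s *: Xp (E r s) (Z (br p (ipar s (+) ipar r) x (E s r)) g)) = 0.
Proof.
pose T1 r s := (-1) ^+ (ipar s) *:
  \sum_(u < n + n) x u r *: Xp (E u s) (Z (E s r) g).
pose T2 r s := ((-1) ^+ (ipar s) * sg r s) *:
  \sum_(v < n + n) x s v *: Xp (E r v) (Z (E s r) g).
pose T3 r s := ((-1) ^+ (ipar s) * sg r s) *:
  \sum_(u < n + n) x u s *: Xp (E r s) (Z (E u r) g).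
pose T4 r s := (-1) ^+ (ipar s) *:
  \sum_(v < n + n) x r v *: Xp (E r s) (Z (E s v) g).
rewrite -big_split /=.
rewrite (eq_bigr (fun r => (\sum_(s < n + n) T1 r s - \sum_(s < n + n) T2 r s)
     + (\sum_(s < n + n) T3 r s - \sum_(s < n + n) T4 r s))); last first.
  move=> r _; rewrite -!sumrB -big_split -[in RHS]big_split /=; apply: eq_bigr => s _ /=.
  rewrite /br !mulmx_dr !mulmx_dl (L_B hXp) (L_B hZ) (L_Z hXp) (L_Z hZ).
  rewrite !(L_sumZ hXp) !(L_sumZ hZ).
  rewrite (linB (hXpf _)) (linZ (hXpf _)) !(lin_sumZ (hXpf _)).
  rewrite /T1 /T2 /T3 /T4 scalerBr scalerA scalerBr scalerA.
  by rewrite sgn_pair scale1r scalerBr scalerA.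
have h14 : \sum_(r < n + n) \sum_(s < n + n) T1 r s
         = \sum_(r < n + n) \sum_(s < n + n) T4 r s.
  transitivity (\sum_(r < n + n) \sum_(s < n + n) \sum_(u < n + n)
     ((-1) ^+ (ipar s) * x u r) *: Xp (E u s) (Z (E s r) g)).
    apply: eq_bigr => r _; apply: eq_bigr => s _; rewrite /T1 scaler_sumr.
    by apply: eq_bigr => u _; rewrite scalerA.
  rewrite sum3_perm; apply: eq_bigr => u _; apply: eq_bigr => s _.
  by rewrite /T4 scaler_sumr; apply: eq_bigr => r _; rewrite scalerA.
have h23 : \sum_(r < n + n) \sum_(s < n + n) T2 r s
         = \sum_(r < n + n) \sum_(s < n + n) T3 r s.
  transitivity (\sum_(r < n + n) \sum_(s < n + n) \sum_(v < n + n)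
     ((-1) ^+ (ipar s) * sg r s * x s v) *: Xp (E r v) (Z (E s r) g)).
    apply: eq_bigr => r _; apply: eq_bigr => s _; rewrite /T2 scaler_sumr.
    by apply: eq_bigr => v _; rewrite scalerA.
  symmetry.
  transitivity (\sum_(r < n + n) \sum_(s < n + n) \sum_(u < n + n)
     ((-1) ^+ (ipar s) * sg r s * x u s) *: Xp (E r s) (Z (E u r) g)).
    apply: eq_bigr => r _; apply: eq_bigr => s _; rewrite /T3 scaler_sumr.
    by apply: eq_bigr => v _; rewrite scalerA.
  rewrite sum3_swap; apply: eq_bigr => r _; apply: eq_bigr => s _.
  apply: eq_bigr => v _; congr (_ *: _).
  case: (eqVneq (ipar s (+) ipar v) p) => [hp | /hx ->]; last by rewrite !mulr0.
  rewrite -hp; case: (ipar r); case: (ipar s); case: (ipar v) => /=; ring.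
rewrite big_split !sumrB /= h14 h23.
by rewrite addrA subrK subrr.
Qed.

Lemma casimir g : X x (Kop Xp Z g) + Z x (Kop Xp Z g) = Kop Xp Z (X x g + Z x g).
Proof.
rewrite stepA stepB (linD (Kop_lin hXpf hZf)) addrACA stepD add0r.
by [].
Qed.
End Main.
End Casimir.

Section Ops.
Variable F : fieldType.
Variables (n : nat) (M0 M1 : lmodType F) (a : nat).
Local Notation I := 'I_(n + n).
Local Notation M := 'M[F]_(n + n).
Local Notation SM := (M0 * M1)%type.
Local Notation TSt := (TS n M0 M1 a).
Local Notation idx := {ffun 'I_a -> 'I_(n + n)}.

Lemma sigmaM_lin : lin (@sigmaM F M0 M1).
Proof.
move=> c [m1 m2] [m1' m2']; rewrite /sigmaM.
apply: injective_projections => //=.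
by rewrite scalerN opprD.
Qed.

Lemma sigmaMK (m : SM) : sigmaM (sigmaM m) = m.
Proof. by case: m => m1 m2; rewrite /sigmaM /= opprK. Qed.

Definition sg (b : bool) (s : F) (m : SM) : SM := if b then s *: sigmaM m else m.

Lemma sg_lin b s : lin (sg b s).
Proof.
move=> c m m'; case: b => //=.
by rewrite sigmaM_lin scalerDr !scalerA mulrC.
Qed.

Lemma sg_sg b c s m : s * s = 1 -> sg b s (sg c s m) = sg (b (+) c) s m.
Proof.
move=> ss; case: b; case: c => //=.
by rewrite (linZ sigmaM_lin) sigmaMK scalerA ss scale1r.
Qed.

Lemma sg_comm b c s s' m : sg b s (sg c s' m) = sg c s' (sg b s m).
Proof.
case: b; case: c => //=.
by rewrite !(linZ sigmaM_lin) !scalerA mulrC.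
Qed.

Lemma sg_sign c s (b : bool) m : sg c (s * (-1) ^+ b) m = (-1) ^+ (b && c) *: sg c s m.
Proof. by case: c => /=; rewrite ?andbT ?andbF ?expr0 ?scale1r // scalerA mulrC. Qed.

Lemma sg_scale b s c m : sg b s (c *: m) = c *: sg b s m.
Proof. exact: (linZ (sg_lin b s)). Qed.

Lemma updE (w : idx) t k s : upd w t k s = if s == t then k else w s.
Proof. by rewrite ffunE. Qed.
Lemma upd_same (w : idx) t k : upd w t k t = k.
Proof. by rewrite updE eqxx. Qed.
Lemma upd_other (w : idx) t k s : s != t -> upd w t k s = w s.
Proof. by move=> /negbTE h; rewrite updE h. Qed.
Lemma upd_upd (w : idx) t k l : upd (upd w t k) t l = upd w t l.
Proof. by apply/ffunP => s; rewrite !updE; case: eqP. Qed.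
Lemma upd_comm (w : idx) t t' k l : t != t' ->
  upd (upd w t k) t' l = upd (upd w t' l) t k.
Proof.
move=> ntt; apply/ffunP => s; rewrite !updE.
case: (eqVneq s t) => [->|nst] //.
by rewrite (negbTE ntt).
Qed.

Lemma sgn_sq (w : idx) t : sgn_before F w t * sgn_before F w t = 1.
Proof.
rewrite /sgn_before; apply: (big_ind (fun z : F => z * z = 1)).
- by rewrite mulr1.
- by move=> x y hx hy; rewrite mulrACA hx hy mulr1.
- by move=> s _; rewrite sign_sq.
Qed.

Lemma sgn_upd_le (w : idx) (t t' : 'I_a) k : (t' <= t)%N ->
  sgn_before F (upd w t k) t' = sgn_before F w t'.
Proof.
move=> le; rewrite /sgn_before; apply: eq_bigr => s hs; rewrite upd_other //.
by apply: contraTneq hs => ->; rewrite -leqNgt.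
Qed.

Lemma sgn_upd_lt (w : idx) (t t' : 'I_a) k : (t < t')%N ->
  sgn_before F (upd w t k) t'
  = (-1) ^+ (ipar (w t) (+) ipar k) * sgn_before F w t'.
Proof.
move=> lt; rewrite /sgn_before (bigD1 t) //= [in RHS](bigD1 t) //= upd_same.
rewrite (eq_bigr (fun s => (-1) ^+ ipar (w s))); last first.
  by move=> s /andP [_ hs]; rewrite upd_other.
rewrite signr_addb.
set A := (-1) ^+ ipar k; set B := (-1) ^+ ipar (w t); set P := \prod_(_ < _ | _) _.
have BB : B * B = 1 by apply: sign_sq.
by rewrite [B * A]mulrC -mulrA [B * (B * P)]mulrA BB mul1r.
Qed.

Lemma tsD (f g : TSt) w : (f + g) w = f w + g w. Proof. by rewrite ffunE. Qed.
Lemma tsZ c (f : TSt) w : (c *: f) w = c *: f w. Proof. by rewrite ffunE. Qed.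
Lemma tsN (f : TSt) w : (- f) w = - f w. Proof. by rewrite ffunE. Qed.
Lemma ts0 w : (0 : TSt) w = 0. Proof. by rewrite ffunE. Qed.
Lemma ts_sum (J : Type) (r : seq J) (P : pred J) (G : J -> TSt) w :
  (\sum_(j <- r | P j) G j) w = \sum_(j <- r | P j) G j w.
Proof. exact: sum_ffunE. Qed.
Lemma actME (rho : M -> SM -> SM) x (f : TSt) w : actM rho x f w = rho x (f w).
Proof. by rewrite ffunE. Qed.

Lemma act_homE (y : M) b (t : 'I_a) (f : TSt) w :
  act_hom y b t f w = \sum_(k < n + n) y (w t) k *: sg b (sgn_before F w t) (f (upd w t k)).
Proof. by rewrite ffunE. Qed.

Lemma act_hom_lin (y : M) b (t : 'I_a) : lin (act_hom (M0:=M0) (M1:=M1) y b t).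
Proof.
move=> c f g; apply/ffunP => w; rewrite tsD tsZ !act_homE scaler_sumr -big_split.
apply: eq_bigr => k _ /=; rewrite tsD tsZ (sg_lin b) scalerDr !scalerA mulrC.
by [].
Qed.

Lemma act_hom_lmx b (t : 'I_a) (f : TSt) c (y z : M) :
  act_hom (c *: y + z) b t f = c *: act_hom y b t f + act_hom z b t f.
Proof.
apply/ffunP => w; rewrite tsD tsZ !act_homE scaler_sumr -big_split.
by apply: eq_bigr => k _ /=; rewrite !mxE scalerDl scalerA.
Qed.

Lemma act_hom0 b (t : 'I_a) (f : TSt) : act_hom (0 : M) b t f = 0.
Proof.
apply/ffunP => w; rewrite ts0 act_homE big1 // => k _.
by rewrite mxE scale0r.
Qed.

Lemma act_hom_comp (y z : M) b c (t : 'I_a) (f : TSt) :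
  act_hom y b t (act_hom z c t f) = act_hom (y *m z) (b (+) c) t f.
Proof.
apply/ffunP => w; rewrite !act_homE.
transitivity (\sum_(k < n + n) \sum_(l < n + n) (y (w t) k * z k l) *:
   sg b (sgn_before F w t) (sg c (sgn_before F w t) (f (upd w t l)))).
  apply: eq_bigr => k _; rewrite act_homE upd_same sgn_upd_le //.
  rewrite (lin_sumZ (sg_lin _ _)) scaler_sumr.
  by apply: eq_bigr => l _; rewrite upd_upd scalerA.
rewrite exchange_big; apply: eq_bigr => l _; rewrite mxE scaler_suml.
by apply: eq_bigr => k _; rewrite sg_sg ?sgn_sq.
Qed.

Lemma act_hom_cross (y z : M) b c (t t' : 'I_a) (f : TSt) : (t < t')%N -> homog b y ->
  act_hom y b t (act_hom z c t' f) = (-1) ^+ (b && c) *: act_hom z c t' (act_hom y b t f).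
Proof.
move=> lt hy; have ntt : t != t' by rewrite neq_ltn lt.
have nt't : t' != t by rewrite eq_sym.
apply/ffunP => w; rewrite tsZ !act_homE.
transitivity (\sum_(k < n + n) \sum_(l < n + n) (y (w t) k * z (w t') l) *:
   sg b (sgn_before F w t) (sg c (sgn_before F (upd w t k) t')
      (f (upd (upd w t k) t' l)))).
  apply: eq_bigr => k _; rewrite act_homE upd_other //.
  rewrite (lin_sumZ (sg_lin _ _)) scaler_sumr.
  by apply: eq_bigr => l _; rewrite scalerA.
rewrite scaler_sumr exchange_big; apply: eq_bigr => l _.
rewrite act_homE upd_other // (sgn_upd_le _ _ (ltnW lt)).
rewrite (lin_sumZ (sg_lin _ _)) !scaler_sumr; apply: eq_bigr => k _.
rewrite upd_comm //.
case: (eqVneq (ipar (w t) (+) ipar k) b) => [hb | /hy ->]; last first.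
  by rewrite mul0r !scale0r !scaler0.
rewrite sgn_upd_lt // hb [(-1) ^+ b * _]mulrC sg_sign sg_scale sg_comm !scalerA.
by rewrite [y (w t) k * _]mulrC [_ * (-1) ^+ (b && c)]mulrC mulrA.
Qed.

Section RhoCross.
Variables (rho : M -> SM -> SM) (x : M) (p : bool).
Hypothesis hlin : lin (rho x).
Hypothesis hsig : forall m, rho x (sigmaM m) = (-1) ^+ p *: sigmaM (rho x m).

Lemma rho_sg c s m : rho x (sg c s m) = (-1) ^+ (p && c) *: sg c s (rho x m).
Proof.
case: c => /=; last by rewrite andbF expr0 scale1r.
by rewrite (linZ hlin) hsig andbT !scalerA mulrC.
Qed.

Lemma actM_cross (z : M) c (t : 'I_a) (f : TSt) :
  actM rho x (act_hom z c t f) = (-1) ^+ (p && c) *: act_hom z c t (actM rho x f).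
Proof.
apply/ffunP => w; rewrite tsZ actME !act_homE (lin_sumZ hlin) scaler_sumr.
apply: eq_bigr => k _; rewrite rho_sg actME !scalerA.
by rewrite mulrC.
Qed.
End RhoCross.

End Ops.

Section Struct.
Variable F : fieldType.
Variables (n : nat) (M0 M1 : lmodType F) (a : nat).
Local Notation I := 'I_(n + n).
Local Notation M := 'M[F]_(n + n).
Local Notation SM := (M0 * M1)%type.
Local Notation TSt := (TS n M0 M1 a).

Lemma evpart_lin c (y z : M) : evpart (c *: y + z) = c *: evpart y + evpart z.
Proof. by apply/matrixP => r s; rewrite !mxE; case: ifP => _; rewrite ?mulr0 ?addr0. Qed.
Lemma oddpart_lin c (y z : M) : oddpart (c *: y + z) = c *: oddpart y + oddpart z.
Proof. by rewrite /oddpart evpart_lin scalerBr opprD addrACA. Qed.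

Lemma actV_lmx (t : 'I_a) (f : TSt) c (y z : M) :
  actV (c *: y + z) t f = c *: actV y t f + actV z t f.
Proof. by rewrite /actV evpart_lin oddpart_lin !act_hom_lmx scalerDr addrACA. Qed.

Lemma actV_lin (y : M) (t : 'I_a) : lin (actV (M0:=M0) (M1:=M1) y t).
Proof. by move=> c f g; rewrite /actV !act_hom_lin scalerDr addrACA. Qed.

Lemma evpart_homog0 (y : M) : homog false y -> evpart y = y.
Proof.
move=> hy; apply/matrixP => r s; rewrite mxE; case: eqP => // ne.
by rewrite hy //; move: ne; case: (ipar r); case: (ipar s).
Qed.
Lemma evpart_homog1 (y : M) : homog true y -> evpart y = 0.
Proof.
move=> hy; apply/matrixP => r s; rewrite !mxE; case: eqP => // e.
by rewrite hy // e; case: (ipar s).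
Qed.

Lemma actV_homog b (y : M) (t : 'I_a) (f : TSt) : homog b y -> actV y t f = act_hom y b t f.
Proof.
case: b => hy; rewrite /actV /oddpart.
  by rewrite evpart_homog1 // act_hom0 add0r subr0.
by rewrite evpart_homog0 // subrr act_hom0 addr0.
Qed.

Section Rho.
Variable rho : M -> SM -> SM.
Hypothesis hrho : is_pn_supermodule rho.

Lemma rho_lin x : lin (rho x).
Proof. by move=> c f g; case: hrho => h _ _ _ _; apply: h. Qed.
Lemma rho_lmx c x y m : in_pn x -> in_pn y -> rho (c *: x + y) m = c *: rho x m + rho y m.
Proof. by case: hrho => _ h _ _ _; apply: h. Qed.
Lemma rho_brE p q x y m : in_pn x -> in_pn y -> homog p x -> homog q y ->
  rho (br p q x y) m = rho x (rho y m) - (-1) ^+ (p && q) *: rho y (rho x m).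
Proof. by case: hrho => _ _ _ _ h; apply: h. Qed.

Lemma rho_sigma x p : in_pn x -> homog p x ->
  forall m, rho x (sigmaM m) = (-1) ^+ p *: sigmaM (rho x m).
Proof.
move=> hx hp [m1 m2].
have e1 : sigmaM (m1, m2) = (-1) *: ((0 : M0), m2) + (m1, (0 : M1)).
  by apply: injective_projections; rewrite /= ?scaler0 ?add0r ?scaleN1r ?addr0.
have e2 : (m1, m2) = 1 *: ((0 : M0), m2) + (m1, (0 : M1)).
  by apply: injective_projections; rewrite /= ?scaler0 ?add0r ?scale1r ?addr0.
rewrite e1 e2 !(rho_lin x).
case: hrho => _ _ h3 h4 _.
case: p hp => hp.
  have [hA hB] := h4 x hx hp; move: (hA m1) (hB m2).
  case: (rho x (m1, 0)) => A1 A2; case: (rho x (0, m2)) => B1 B2 /= -> ->.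
  by apply: injective_projections; rewrite /= ?expr1 ?scaler0 ?addr0 ?add0r ?scale1r ?scaleN1r ?opprK.
have [hA hB] := h3 x hx hp; move: (hA m1) (hB m2).
case: (rho x (m1, 0)) => A1 A2; case: (rho x (0, m2)) => B1 B2 /= -> ->.
by apply: injective_projections; rewrite /= ?expr0 ?scaler0 ?addr0 ?add0r ?scale1r ?scaleN1r ?opprK.
Qed.

Definition A (i : option 'I_a) (y : M) : TSt -> TSt :=
  match i with None => actM rho y | Some t => actV y t end.

Lemma A_lin i y : lin (A i y).
Proof.
case: i => [t|] /=; first exact: actV_lin.
by move=> c f g; apply/ffunP => w; rewrite actME !tsD !tsZ !actME (rho_lin y).
Qed.

Definition goodA (i : option 'I_a) (y : M) := if i is None then in_pn y else True.

Lemma A_lmx i c (y z : M) f : goodA i y -> goodA i z ->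
  A i (c *: y + z) f = c *: A i y f + A i z f.
Proof.
case: i => [t|] /= hy hz; first exact: actV_lmx.
by apply/ffunP => w; rewrite tsD tsZ !actME rho_lmx.
Qed.

Lemma A_cross i j (y z : M) p q f : i != j -> homog p y -> homog q z ->
  goodA i y -> goodA j z ->
  A i y (A j z f) = (-1) ^+ (p && q) *: A j z (A i y f).
Proof.
case: i => [t|]; case: j => [t'|] //= nij hy hz gy gz.
- rewrite !(actV_homog _ _ hy) !(actV_homog _ _ hz).
  have ntt : t != t' by apply: contraNneq nij => ->.
  case: (ltngtP t t') => [lt|gt|eq]; first exact: act_hom_cross.
    rewrite (act_hom_cross _ _ _ gt hz) scalerA andbC sign_sq scale1r //.
  by move/val_inj: eq ntt => ->; rewrite eqxx.
- rewrite !(actV_homog _ _ hy).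
  rewrite (actM_cross (rho_lin z) (rho_sigma gz hz)) scalerA andbC sign_sq scale1r //.
- by rewrite !(actV_homog _ _ hz) (actM_cross (rho_lin y) (rho_sigma gy hy)).
Qed.

Lemma A_br i (y z : M) p q f : homog p y -> homog q z -> goodA i y -> goodA i z ->
  A i (br p q y z) f = A i y (A i z f) - (-1) ^+ (p && q) *: A i z (A i y f).
Proof.
case: i => [t|] /= hy hz gy gz.
  have hzy : homog (p (+) q) (z *m y) by rewrite addbC; exact: homogM.
  rewrite (actV_homog _ _ (homogB (homogM hy hz) (homogZ _ hzy))).
  rewrite !(actV_homog _ _ hz) !(actV_homog _ _ hy) !act_hom_comp [q (+) p]addbC.
  by rewrite /br addrC -scaleNr act_hom_lmx scaleNr addrC.
by apply/ffunP => w; rewrite tsD tsN tsZ !actME rho_brE.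
Qed.

End Rho.
End Struct.

Section OmegaK.
Variables (F : fieldType) (n : nat) (W : lmodType F).
Local Notation I := 'I_(n + n).
Local Notation M := 'M[F]_(n + n).
Local Notation E := (@delta_mx F (n + n) (n + n)).
Hypothesis h2 : (2%:R : F) != 0.
Variables (X Z : M -> W -> W).
Hypothesis XL : forall c y z g, in_pn y -> in_pn z -> X (c *: y + z) g = c *: X y g + X z g.
Hypothesis hZ : lmx Z.
Hypothesis hXf : forall y, lin (X y).

Lemma tau0 : tau (0 : M) = 0.
Proof. by apply/matrixP => r s; rewrite !mxE mulr0. Qed.
Lemma in_pn0 : in_pn (0 : M).
Proof. by have := in_pn_Ptau (0 : M); rewrite /Ptau tau0 addr0. Qed.

Lemma X0 g : X 0 g = 0.
Proof.
have h := XL 1 g in_pn0 in_pn0; rewrite !scale1r !addr0 in h.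
by apply: (addrI (X 0 g)); rewrite addr0 -h.
Qed.
Lemma XN y g : in_pn y -> X (- y) g = - X y g.
Proof.
move=> hy; have h := XL (-1) g hy in_pn0.
by rewrite addr0 scaleN1r X0 addr0 in h; rewrite h scaleN1r.
Qed.

Lemma in_pn_Am (i j : 'I_n) : in_pn (Am F i j).
Proof. by rewrite -Ptau_ee; apply: in_pn_Ptau. Qed.
Lemma in_pn_Bp (i j : 'I_n) : in_pn (Bp F i j).
Proof. by rewrite -Ptau_eo; apply: in_pn_Ptau. Qed.
Lemma in_pn_Cm (i j : 'I_n) : in_pn (Cm F i j).
Proof. by rewrite -Ptau_oe; apply: in_pn_Ptau. Qed.

Lemma tri_split (V : zmodType) (G : 'I_n -> 'I_n -> V) :
  \sum_(i < n) \sum_(j < n) G i j = \sum_(i < n) G i i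
    + \sum_(i < n) \sum_(j < n | (i < j)%N) G i j
    + \sum_(i < n) \sum_(j < n | (i < j)%N) G j i.
Proof.
have h1 i : \sum_(j < n) G i j
   = G i i + \sum_(j < n | (i < j)%N) G i j + \sum_(j < n | (j < i)%N) G i j.
  rewrite (bigD1 i) //= (bigID (fun j : 'I_n => (i < j)%N)) /= -addrA.
  congr (_ + (_ + _)); apply: eq_bigl => j; rewrite -val_eqE /=.
    by case: ltngtP.
  by case: ltngtP.
rewrite (eq_bigr _ (fun i _ => h1 i)) !big_split /=; congr (_ + _).
rewrite (eq_bigr (fun i : 'I_n => \sum_(j < n) if (j < i)%N then G i j else 0));
  last by move=> i _; rewrite big_mkcond.
rewrite exchange_big /=; apply: eq_bigr => j _.
by rewrite [RHS]big_mkcond.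
Qed.

Lemma sum_split_evod (V : zmodType) (G : I -> V) :
  \sum_(k < n + n) G k = \sum_(i < n) G (ev i) + \sum_(i < n) G (od i).
Proof. exact: big_split_ord. Qed.

Lemma comm4 (V : zmodType) (x1 x2 x3 x4 : V) : x1 + x2 - x3 + x4 = x1 - x3 + (x4 + x2).
Proof. by rewrite -!addrA; congr (_ + _); rewrite addrC -addrA. Qed.

Lemma Omega_K f : Omega_op X Z f = Kop (fun y => X (Ptau y)) Z f.
Proof.
have RHS : Kop (fun y => X (Ptau y)) Z f =
  \sum_(i < n) \sum_(j < n) (X (Am F i j) (Z (E (ev j) (ev i)) f)
                             - X (Bp F i j) (Z (E (od j) (ev i)) f))
  + \sum_(i < n) \sum_(j < n) (X (Cm F i j) (Z (E (ev j) (od i)) f)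
                             + X (Am F j i) (Z (E (od j) (od i)) f)).
  rewrite /Kop sum_split_evod; congr (_ + _); apply: eq_bigr => i _;
    rewrite sum_split_evod -big_split /=; apply: eq_bigr => j _.
    rewrite ipar_ev ipar_od Ptau_ee Ptau_eo.
    by rewrite expr0 expr1 scale1r scaleN1r.
  rewrite ipar_ev ipar_od Ptau_oe Ptau_oo.
  by rewrite expr0 expr1 scale1r scaleN1r XN ?opprK //; apply: in_pn_Am.
have SA : \sum_(i < n) \sum_(j < n) X (Am F i j) (Z (Ap F j i) f)
  = \sum_(i < n) \sum_(j < n) X (Am F i j) (Z (E (ev j) (ev i)) f)
  + \sum_(i < n) \sum_(j < n) X (Am F j i) (Z (E (od j) (od i)) f).
  rewrite [X in _ = _ + X]exchange_big -big_split; apply: eq_bigr => i _.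
  rewrite -big_split; apply: eq_bigr => j _ /=.
  by rewrite /Ap /Emu (L_D hZ) (linD (hXf _)).
have SB : 2%:R^-1 *: \sum_(i < n) X (Bp F i i) (Z (Cp F i i) f)
  + \sum_(i < n) \sum_(j < n | (i < j)%N) X (Bp F i j) (Z (Cp F j i) f)
  = \sum_(i < n) \sum_(j < n) X (Bp F i j) (Z (E (od j) (ev i)) f).
  rewrite (tri_split (fun i j => X (Bp F i j) (Z (E (od j) (ev i)) f))) /= -addrA.
  congr (_ + _).
    have -> : \sum_(i < n) X (Bp F i i) (Z (Cp F i i) f)
      = 2%:R *: \sum_(i < n) X (Bp F i i) (Z (E (od i) (ev i)) f).
      rewrite scaler_sumr; apply: eq_bigr => i _.
      by rewrite /Cp /Emu (L_D hZ) (linD (hXf _)) scaler_nat mulr2n.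
    by rewrite scalerA mulVf // scale1r.
  rewrite -big_split; apply: eq_bigr => i _; rewrite -big_split; apply: eq_bigr => j _ /=.
  rewrite /Cp /Emu (L_D hZ) (linD (hXf _)); congr (_ + _).
  by rewrite /Bp /Emu addrC.
have SC : \sum_(i < n) \sum_(j < n | (i < j)%N) X (Cm F i j) (Z (Bm F j i) f)
  = \sum_(i < n) \sum_(j < n) X (Cm F i j) (Z (E (ev j) (od i)) f).
  rewrite (tri_split (fun i j => X (Cm F i j) (Z (E (ev j) (od i)) f))) /=.
  have -> : \sum_(i < n) X (Cm F i i) (Z (E (ev i) (od i)) f) = 0.
    by rewrite big1 // => i _; rewrite /Cm subrr X0.
  rewrite add0r.
  rewrite -big_split; apply: eq_bigr => i _; rewrite -big_split; apply: eq_bigr => j _ /=.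
  rewrite /Bm /Emu (L_B hZ) (linB (hXf _)); congr (_ + _).
  rewrite (_ : Cm F i j = - Cm F j i) ?XN ?opprK //; first exact: in_pn_Cm.
  by rewrite /Cm opprB.
rewrite /Omega_op RHS -[_ - _ - _]addrA -opprD SB SA SC comm4.
congr (_ + _).
  by rewrite -sumrB; apply: eq_bigr => i _; rewrite sumrB.
by rewrite -big_split; apply: eq_bigr => i _; rewrite big_split.
Qed.
End OmegaK.

Section Final.
Variable F : fieldType.
Variables (n : nat) (M0 M1 : lmodType F) (a : nat).
Local Notation I := 'I_(n + n).
Local Notation M := 'M[F]_(n + n).
Local Notation SM := (M0 * M1)%type.
Local Notation TSt := (TS n M0 M1 a).
Local Notation E := (@delta_mx F (n + n) (n + n)).
Variable rho : M -> SM -> SM.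
Hypothesis hrho : is_pn_supermodule rho.
Hypothesis h2 : (2%:R : F) != 0.

Definition Pn (m : nat) (i : option 'I_a) : bool := if i is Some s then (s < m)%N else true.
Definition D (m : nat) (y : M) (g : TSt) : TSt := \sum_(i | Pn m i) A rho i y g.

Lemma good_pn (i : option 'I_a) (y : M) : in_pn y -> goodA i y.
Proof. by case: i. Qed.

Lemma D_lin m y : lin (D m y).
Proof.
move=> c f g; rewrite /D scaler_sumr -big_split; apply: eq_bigr => i _ /=.
exact: (A_lin hrho).
Qed.

Lemma D_lmx m c y z g : in_pn y -> in_pn z -> D m (c *: y + z) g = c *: D m y g + D m z g.
Proof.
move=> hy hz; rewrite /D scaler_sumr -big_split; apply: eq_bigr => i _ /=.
by apply: (A_lmx hrho); apply: good_pn.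
Qed.

Lemma D_br m y z p q g : homog p y -> homog q z -> in_pn y -> in_pn z ->
  D m (br p q y z) g = D m y (D m z g) - (-1) ^+ (p && q) *: D m z (D m y g).
Proof.
move=> hy hz py pz; rewrite /D.
have e1 : \sum_(i | Pn m i) A rho i y (\sum_(j | Pn m j) A rho j z g)
   = \sum_(i | Pn m i) \sum_(j | Pn m j) A rho i y (A rho j z g).
  by apply: eq_bigr => i _; rewrite (lin_sum (A_lin hrho i y)).
have e2 : \sum_(j | Pn m j) A rho j z (\sum_(i | Pn m i) A rho i y g)
   = \sum_(i | Pn m i) \sum_(j | Pn m j) A rho j z (A rho i y g).
  by rewrite exchange_big; apply: eq_bigr => j _; rewrite (lin_sum (A_lin hrho j z)).
rewrite e1 e2 scaler_sumr -sumrB; apply: eq_bigr => i Pi.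
rewrite scaler_sumr -sumrB (bigD1 i) //= big1 ?addr0 => [|j /andP [_ nji]].
  by apply: (A_br hrho) => //; apply: good_pn.
rewrite (A_cross hrho g _ hy hz (good_pn _ py) (good_pn _ pz)) ?subrr //.
by rewrite eq_sym.
Qed.

Lemma D_cross m y z p q (s : 'I_a) g : (m <= s)%N -> homog p y -> homog q z -> in_pn y ->
  D m y (actV z s g) = (-1) ^+ (p && q) *: actV z s (D m y g).
Proof.
move=> ms hy hz py; rewrite /D (lin_sum (actV_lin z s)) scaler_sumr.
apply: eq_bigr => i Pi.
apply: (A_cross hrho (j := Some s)) => //; last exact: good_pn.
case: i Pi => [s'|] //= lt; apply/eqP => -[e]; move: lt; rewrite e.
by rewrite ltnNge ms.
Qed.

Lemma D_cross' m y z p q (s : 'I_a) g : (m <= s)%N -> homog p y -> homog q z -> in_pn y ->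
  actV z s (D m y g) = (-1) ^+ (p && q) *: D m y (actV z s g).
Proof.
by move=> ms hy hz py; rewrite (D_cross _ ms hy hz py) scalerA sign_sq scale1r.
Qed.

Lemma D_succ (k : 'I_a) y g : D k.+1 y g = D k y g + actV y k g.
Proof.
rewrite /D (bigD1 (Some k)) /= ?ltnSn // addrC; congr (_ + _).
apply: eq_bigl => -[s|] //=.
by rewrite ltnS ltn_neqAle andbC; congr (_ && _).
Qed.

Lemma D_split (k : 'I_a) (j : nat) y g : (k < j)%N ->
  D j y g = D k.+1 y g + \sum_(i | Pn j i && ~~ Pn k.+1 i) A rho i y g.
Proof.
move=> kj; rewrite /D (bigID (Pn k.+1)) /=; congr (_ + _).
apply: eq_bigl => -[s|] //=; rewrite andb_idl // => h.
exact: leq_trans h kj.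
Qed.

Lemma big_opt (V : zmodType) (t0 : 'I_a) (P : pred (option 'I_a)) (G : option 'I_a -> V) :
  P None -> \sum_(i | P i) G i = G None + \sum_(s | P (Some s)) G (Some s).
Proof.
move=> PN; rewrite (bigD1 None) //=; congr (_ + _).
rewrite (reindex_onto Some (odflt t0)) /=; last by case=> [s|] // /andP [].
by apply: eq_bigl => s; rewrite eqxx !andbT.
Qed.

Lemma Omega_sum (P : pred (option 'I_a)) (B : option 'I_a -> M -> TSt -> TSt)
    (Z : M -> TSt -> TSt) f :
  Omega_op (fun x g => \sum_(i | P i) B i x g) Z f = \sum_(i | P i) Omega_op (B i) Z f.
Proof.
rewrite /Omega_op big_split sumrB sumrB /=.
congr (_ - _ - _ + _).
- by under eq_bigr do rewrite exchange_big; rewrite exchange_big.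
- by rewrite exchange_big scaler_sumr.
- by under eq_bigr do rewrite exchange_big; rewrite exchange_big.
- by under eq_bigr do rewrite exchange_big; rewrite exchange_big.
Qed.

Lemma Yop_D (t : 'I_a) (f : TSt) : Yop rho t f = Omega_op (D t) (fun y => actV y t) f.
Proof.
by rewrite /D Omega_sum (big_opt t).
Qed.

Lemma YopK (t : 'I_a) (f : TSt) :
  Yop rho t f = Kop (fun y => D t (Ptau y)) (fun y => actV y t) f.
Proof.
rewrite Yop_D Omega_K //.
- by move=> c y z g hy hz; apply: D_lmx.
- by move=> g c y z; apply: actV_lmx.
- exact: D_lin.
Qed.

Lemma Yop_lin (t : 'I_a) : lin (Yop rho t).
Proof.
move=> c f g; rewrite !YopK; apply: Kop_lin => y.
  exact: D_lin.
exact: actV_lin.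
Qed.

Lemma Yk_comm_D (k : 'I_a) y p g : homog p y -> in_pn y -> tau y = y ->
  Yop rho k (D k.+1 y g) = D k.+1 y (Yop rho k g).
Proof.
move=> hy py ty; rewrite !YopK !D_succ; symmetry.
apply: (casimir (X := D k) (x := y) (p := p)) => //.
- by move=> h c y1 y2 /=; rewrite Ptau_lin D_lmx //; apply: in_pn_Ptau.
- by move=> h c y1 y2; apply: actV_lmx.
- by move=> z; apply: D_lin.
- by move=> z; apply: actV_lin.
- exact: D_lin.
- move=> r s h; rewrite Ptau_br //; last exact: homog_delta.
  apply: D_br => //; last exact: in_pn_Ptau.
  by apply: Ptau_homog; exact: homog_delta.
- move=> r s h; apply: (A_br hrho (i := Some k)) => //.
  exact: homog_delta.
- move=> r s h; apply: D_cross => //; exact: homog_delta.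
- move=> r s h.
  have hP : homog (ipar r (+) ipar s) (Ptau (E r s)).
    by apply: Ptau_homog; exact: homog_delta.
  by rewrite (D_cross' _ (leqnn k) hP hy (in_pn_Ptau _)) andbC.
Qed.

Lemma Yk_comm_T (k s : 'I_a) z q g : (k < s)%N -> homog q z ->
  Yop rho k (actV z s g) = actV z s (Yop rho k g).
Proof.
move=> ks hz; rewrite !YopK /Kop (lin_sum (actV_lin z s)); apply: eq_bigr => r _.
rewrite (lin_sum (actV_lin z s)); apply: eq_bigr => s' _.
rewrite (linZ (actV_lin z s)); congr (_ *: _).
have hE : homog (ipar s' (+) ipar r) (E s' r) by exact: homog_delta.
have hP : homog (ipar r (+) ipar s') (Ptau (E r s')).
  by apply: Ptau_homog; exact: homog_delta.
have hc : actV (E s' r) k (actV z s g)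
    = (-1) ^+ ((ipar s' (+) ipar r) && q) *: actV z s (actV (E s' r) k g).
  apply: (A_cross hrho (i := Some k) (j := Some s) g _ hE hz) => //.
  by apply/eqP => -[e]; move: ks; rewrite e ltnn.
rewrite hc.
rewrite (linZ (D_lin _ _)) (D_cross _ (ltnW ks) hP hz (in_pn_Ptau _)) scalerA.
by rewrite addbC sign_sq scale1r.
Qed.

Lemma Yk_comm_Dj (k : 'I_a) (j : nat) y p g : (k < j)%N -> homog p y -> in_pn y -> tau y = y ->
  Yop rho k (D j y g) = D j y (Yop rho k g).
Proof.
move=> kj hy py ty; rewrite !(D_split _ _ kj) (linD (Yop_lin k)).
rewrite (Yk_comm_D _ _ hy py ty) (lin_sum (Yop_lin k)); congr (_ + _).
apply: eq_bigr => -[s|] //= /andP [_ hs].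
by apply: Yk_comm_T hy; rewrite ltnS -ltnNge in hs.
Qed.

Lemma key (k j : 'I_a) (f : TSt) : (k < j)%N ->
  Yop rho k (Yop rho j f) = Yop rho j (Yop rho k f).
Proof.
move=> kj; rewrite [Yop rho j f]YopK [Yop rho j (Yop rho k f)]YopK /Kop.
rewrite (lin_sum (Yop_lin k)); apply: eq_bigr => r _.
rewrite (lin_sum (Yop_lin k)); apply: eq_bigr => s _.
rewrite (linZ (Yop_lin k)); congr (_ *: _).
rewrite (Yk_comm_Dj _ kj (Ptau_homog (homog_delta F (r := r) (s := s)))).
- by rewrite (Yk_comm_T _ kj (homog_delta F (r := s) (s := r))).
- exact: in_pn_Ptau.
- exact: tau_Ptau.
Qed.

End Final.

Unset Implicit Arguments.

Theorem mainTheorem13 (F : numClosedFieldType) (n : nat) (M0 M1 : lmodType F)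
  (rho : 'M[F]_(n + n) -> (M0 * M1)%type -> (M0 * M1)%type) (a : nat) :
  (0 < n)%N -> (0 < a)%N ->
  is_pn_supermodule rho ->
  forall (t1 t2 : 'I_a) (f : TS n M0 M1 a),
    Yop rho t1 (Yop rho t2 f) = Yop rho t2 (Yop rho t1 f).
Proof.
move=> _ _ hrho t1 t2 f.
have h2 : (2%:R : F) != 0 by rewrite pnatr_eq0.
case: (ltngtP t1 t2) => [lt|gt|eq].
- exact: (key hrho h2 f lt).
- by rewrite (key hrho h2 f gt).
- by rewrite (val_inj eq).
Qed.
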